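(* Let $X$ be a Banach space with $\kappa_0(X)<\infty$. Then there exists $\epsilon>0$ such that every Banach space $Y$ with $d_K(X,Y)<\epsilon$ satisfies $\kappa_0(Y)<\infty$. (That is, the property $\kappa_0(X)<\infty$ is open for the Kadets distance.)
   Context: The Kadets distance $d_K(X,Y)$ is the infimum, over all Banach spaces $Z$ and linear isometric embeddings $U:X\to Z$, $V:Y\to Z$, of the Hausdorff distance in $Z$ between $UB_X$ and $VB_Y$ ($B_X$ the closed unit ball). For a Banach space $X$, $\kappa_0(X)$ is the least constant $\kappa_0$ (or $\infty$ if none exists) such that whenever $f:X\to\mathbb R$ is homogeneous, bounded on $B_X$, and satisfies $|f(x_1+x_2)-f(x_1)-f(x_2)|\le\|x_1\|_X+\|x_2\|_X$ for all $x_1,x_2\in X$, there is a continuous linear functional $x^*$ on $X$ with $|f(x)-x^*(x)|\le\kappa_0\|x\|_X$ for all $x\in X$. *)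

(* Defs.v *)
From HB Require Import structures.
From mathcomp Require Import all_boot all_order all_algebra.
From mathcomp Require Import all_classical all_reals all_analysis.
From mathcomp Require Import Rstruct Rstruct_topology.
Set Implicit Arguments. Unset Strict Implicit. Unset Printing Implicit Defensive.
Import Order.TTheory GRing.Theory Num.Theory.
Import numFieldNormedType.Exports.
Local Open Scope classical_set_scope.
Local Open Scope ring_scope.

Notation Rr := Rdefinitions.R.

Definition unit_ball (X : normedModType Rr) : set X := [set x | `|x| <= 1].

Definition lin_isometry (X Z : normedModType Rr) (U : X -> Z) : Prop :=
  (forall (a : Rr) (x y : X), U (a *: x + y) = a *: U x + U y) /\
  (forall x : X, `|U x| = `|x|).

Definition dist_set (Z : normedModType Rr) (z : Z) (A : set Z) : \bar Rr :=
  ereal_inf [set (`|z - a|)%:E | a in A].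

Definition hausdorff (Z : normedModType Rr) (A B : set Z) : \bar Rr :=
  maxe (ereal_sup [set dist_set a B | a in A])
       (ereal_sup [set dist_set b A | b in B]).

Definition kadets (X Y : completeNormedModType Rr) : \bar Rr :=
  ereal_inf [set e : \bar Rr | exists (Z : completeNormedModType Rr) (U : X -> Z) (V : Y -> Z),
     [/\ lin_isometry U, lin_isometry V &
         e = hausdorff (U @` @unit_ball X) (V @` @unit_ball Y)]].

Definition homogeneous (X : normedModType Rr) (f : X -> Rr) : Prop :=
  forall (a : Rr) (x : X), f (a *: x) = a * f x.

Definition bounded_on_ball (X : normedModType Rr) (f : X -> Rr) : Prop :=
  exists M : Rr, forall x : X, `|x| <= 1 -> `|f x| <= M.

Definition quasilinear1 (X : normedModType Rr) (f : X -> Rr) : Prop :=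
  forall x1 x2 : X, `|f (x1 + x2) - f x1 - f x2| <= `|x1| + `|x2|.

Definition cont_lin_functional (X : normedModType Rr) (g : X -> Rr) : Prop :=
  (forall (a : Rr) (x y : X), g (a *: x + y) = a * g x + g y) /\ continuous g.

Definition kappa0_admissible (X : normedModType Rr) (k : Rr) : Prop :=
  0 <= k /\
  forall f : X -> Rr, homogeneous f -> bounded_on_ball f -> quasilinear1 f ->
    exists g : X -> Rr, cont_lin_functional g /\
      forall x : X, `|f x - g x| <= k * `|x|.

(* kappa_0(X): least admissible constant, +oo if none *)
Definition kappa0 (X : normedModType Rr) : \bar Rr :=
  ereal_inf [set k%:E | k in kappa0_admissible X].

(* Main.v *)
Require Import Defs.
From HB Require Import structures.
From mathcomp Require Import all_boot all_order all_algebra.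
From mathcomp Require Import all_classical all_reals all_analysis.
From mathcomp Require Import Rstruct Rstruct_topology.
From mathcomp Require Import ring lra.
Set Implicit Arguments. Unset Strict Implicit. Unset Printing Implicit Defensive.
Import Order.TTheory GRing.Theory Num.Theory.
Import numFieldNormedType.Exports.
Local Open Scope classical_set_scope.
Local Open Scope ring_scope.

Section HBsec.
Variables (Z : normedModType Rr) (C : Rr).
Hypothesis C0 : 0 <= C.

Definition Good (G : set (Z * Rr)) :=
  [/\ G (0, 0),
      (forall z1 r1 z2 r2, G (z1, r1) -> G (z2, r2) -> G (z1 + z2, r1 + r2)),
      (forall a z r, G (z, r) -> G (a *: z, a * r)) &
      (forall z r, G (z, r) -> r <= C * `|z|)].

Lemma good_abs G z r : Good G -> G (z, r) -> `|r| <= C * `|z|.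
Proof.
case=> _ _ Hs Hb Gzr; rewrite ler_norml Hb // andbT.
have := Hb _ _ (Hs (-1) _ _ Gzr).
by rewrite scaleN1r normrN mulN1r lerNl.
Qed.

Lemma good_ext G z0 : Good G -> exists2 G', Good G' & G `<=` G' /\ exists c, G' (z0, c).
Proof.
move=> GG; have [G0 Ga Gs Gb] := GG.
pose S := [set t | exists z r, G (z, r) /\ t = r - C * `|z - z0|].
have key z1 r1 z2 r2 : G (z1, r1) -> G (z2, r2) ->
    r1 - C * `|z1 - z0| <= C * `|z2 + z0| - r2.
  move=> h1 h2; have := Gb _ _ (Ga _ _ _ _ h1 h2).
  have : `|z1 + z2| <= `|z1 - z0| + `|z2 + z0|.
    by rewrite (_ : z1 + z2 = (z1 - z0) + (z2 + z0)) ?ler_normD // addrACA addNr addr0.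
  move=> hn h; have := ler_wpM2l C0 hn; lra.
have Sne : S !=set0 by exists (0 - C * `|0 - z0|), 0, 0.
have Sub : ubound S (C * `|0 + z0| - 0).
  by move=> t [z [r [Gzr ->]]]; apply: key.
pose c := sup S.
have ci z r : G (z, r) -> r - C * `|z - z0| <= c.
  move=> Gzr; apply: sup_upper_bound; first by split => //; exists (C * `|0 + z0| - 0).
  by exists z, r.
have cii z r : G (z, r) -> c <= C * `|z + z0| - r.
  move=> Gzr; apply: ge_sup => // t [z' [r' [Gzr' ->]]]; exact: key.
pose G' := [set p | exists z r t, G (z, r) /\ p = (z + t *: z0, r + t * c)].
exists G'; last first.
  split; first by move=> [z r] Gzr; exists z, r, 0; rewrite scale0r mul0r !addr0.
  by exists c, 0, 0, 1; rewrite scale1r mul1r !add0r.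
split.
- by exists 0, 0, 0; rewrite scale0r mul0r !addr0.
- move=> z1 r1 z2 r2 [a1 [b1 [t1 [h1 [-> ->]]]]] [a2 [b2 [t2 [h2 [-> ->]]]]].
  exists (a1 + a2), (b1 + b2), (t1 + t2); split; first exact: Ga.
  by rewrite scalerDl mulrDl; congr (_, _); rewrite -!addrA; congr (_ + _);
    rewrite addrCA.
- move=> a z r [a1 [b1 [t1 [h1 [-> ->]]]]].
  exists (a *: a1), (a * b1), (a * t1); split; first exact: Gs.
  by rewrite scalerDr scalerA mulrDr mulrA.
- move=> z r [a1 [b1 [t [h1 [-> ->]]]]].
  have [->|t0] := eqVneq t 0.
    by rewrite scale0r mul0r !addr0; exact: Gb.
  have h' := Gs t^-1 _ _ h1.
  set w := t^-1 *: a1 + z0; set q := t^-1 * b1 + c.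
  have Ew : a1 + t *: z0 = t *: w by rewrite /w scalerDr scalerA divff // scale1r.
  have Eq : b1 + t * c = t * q by rewrite /q mulrDr mulrA divff // mul1r.
  have q1 : q <= C * `|w| by have := cii _ _ h'; rewrite /q /w; lra.
  have q2 : - q <= C * `|w|.
    have := ci _ _ (Gs (-1) _ _ h'); rewrite scaleN1r mulN1r.
    rewrite (_ : - (t^-1 *: a1) - z0 = - w) ?normrN; last by rewrite /w opprD.
    rewrite /q; lra.
  have qa : `|q| <= C * `|w| by rewrite ler_norml; apply/andP; split; lra.
  rewrite Ew Eq normrZ.
  apply: (le_trans (ler_norm _)); rewrite normrM.
  rewrite mulrCA; apply: ler_wpM2l => //.
Qed.

Lemma HahnBanach (X : normedModType Rr) (U : X -> Z) (h : X -> Rr) :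
  (forall (a : Rr) x y, U (a *: x + y) = a *: U x + U y) ->
  (forall (a : Rr) x y, h (a *: x + y) = a * h x + h y) ->
  (forall x, h x <= C * `|U x|) ->
  exists Phi : Z -> Rr,
    [/\ (forall (a : Rr) x y, Phi (a *: x + y) = a * Phi x + Phi y),
        (forall z, `|Phi z| <= C * `|z|) &
        (forall x, Phi (U x) = h x)].
Proof.
move=> Ul hl hb.
have U0 : U 0 = 0.
  have := Ul 1 0 0; rewrite !scale1r !addr0 => /eqP.
  by rewrite -subr_eq0 opprD addrA subrr add0r oppr_eq0 => /eqP.
have h0 : h 0 = 0.
  have := hl 1 0 0; rewrite scale1r mul1r !addr0 => /eqP.
  by rewrite -subr_eq0 opprD addrA subrr add0r oppr_eq0 => /eqP.
pose B := [set p | exists x, p = (U x, h x)].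
have GB : Good B.
  split.
  - by exists 0; rewrite U0 h0.
  - move=> z1 r1 z2 r2 [x1 [] -> ->] [x2 [] -> ->]; exists (x1 + x2).
    by have := Ul 1 x1 x2; have := hl 1 x1 x2; rewrite !scale1r mul1r => -> ->.
  - move=> a z r [x [] -> ->]; exists (a *: x).
    by have := Ul a x 0; have := hl a x 0; rewrite !addr0 U0 h0 !addr0 => -> ->.
  - by move=> z r [x [] -> ->].
pose P := [set G | Good (G `|` B)].
have [A [PA Amax]] : exists A, P A /\ forall B', A `<` B' -> ~ P B'.
  apply: Zorn_bigcup => F FP Ftot.
  have cov p q : ((\bigcup_(K in F) K) `|` B) p -> ((\bigcup_(K in F) K) `|` B) q ->
     exists W, [/\ Good W, W `<=` (\bigcup_(K in F) K) `|` B, W p & W q].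
    have sub X1 : F X1 -> X1 `|` B `<=` (\bigcup_(K in F) K) `|` B.
      by move=> FX w [Xw|Bw]; [left; exists X1|right].
    move=> [[X1 FX Xp]|Bp] [[Y1 FY Yq]|Bq].
    - have [XY|YX] := Ftot _ _ FX FY.
      + by exists (Y1 `|` B); split; [exact: FP|exact: sub|left; exact: XY|left].
      + by exists (X1 `|` B); split; [exact: FP|exact: sub|left|left; exact: YX].
    - by exists (X1 `|` B); split; [exact: FP|exact: sub|left|right].
    - by exists (Y1 `|` B); split; [exact: FP|exact: sub|right|left].
    - by exists B; split => //; move=> w Bw; right.
  split.
  - by right; case: GB.
  - move=> z1 r1 z2 r2 h1 h2; have [W [[_ Wa _ _] WS W1 W2]] := cov _ _ h1 h2.
    exact/WS/Wa.
  - move=> a z r h1; have [W [[_ _ Ws _] WS W1 _]] := cov _ _ h1 h1.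
    exact/WS/Ws.
  - move=> z r h1; have [W [[_ _ _ Wb] WS W1 _]] := cov _ _ h1 h1.
    exact: Wb.
have BA : B `<=` A.
  move=> p Bp; apply: contrapT => nAp.
  apply: (Amax (A `|` B)) => //.
    split; first by move=> w Aw; left.
    by move=> /(_ p (or_intror Bp)).
  by rewrite /P /= -setUA setUid.
have GA : Good A by move: PA; rewrite /P /= (setUidl BA).
have tot z0 : exists r, A (z0, r).
  apply: contrapT => nA.
  have [G' GG' [AG' [c G'c]]] := good_ext z0 GA.
  apply: (Amax G').
    split => // /(_ _ G'c) Ac; apply: nA; by exists c.
  rewrite /P /= (setUidl _) //; exact: subset_trans AG'.
pose Phi z := xget 0 [set r | A (z, r)].
have APhi z : A (z, Phi z) by exact: (xgetPex 0 (tot z)).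
have uniq z r1 r2 : A (z, r1) -> A (z, r2) -> r1 = r2.
  have [_ Ga Gs _] := GA; move=> h1 h2.
  have := good_abs GA (Ga _ _ _ _ h1 (Gs (-1) _ _ h2)).
  rewrite scaleN1r subrr normr0 mulr0 mulN1r normr_le0 subr_eq0 => /eqP //.
exists Phi; split.
- move=> a x y; apply: uniq (APhi _) _.
  have [_ Ga Gs _] := GA; apply: Ga => //; exact: Gs.
- move=> z; exact: good_abs GA (APhi z).
- move=> x; apply: uniq (APhi _) _; apply: BA; by exists x.
Qed.
End HBsec.


Lemma hom_choice (X Y : lmodType Rr) (P : X -> Y -> Prop) :
  (forall x, exists y, P x y) -> (forall (c : Rr) x y, P x y -> P (c *: x) (c *: y)) ->
  exists phi : X -> Y, (forall x, P x (phi x)) /\ forall (a : Rr) x, phi (a *: x) = a *: phi x.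
Proof.
move=> ex sc.
have [psi Hpsi] := choice ex.
pose Cl (x : X) := [set z : X | exists2 a : Rr, a != 0 & z = a *: x].
pose r x := xget 0 (Cl x).
have rC x : Cl x (r x) by apply: (xgetPex 0); exists x, 1; rewrite ?oner_neq0 ?scale1r.
have ClE a x : a != 0 -> Cl (a *: x) = Cl x.
  move=> a0; apply/seteqP; split => z [b b0 ->].
  - by exists (b * a); [rewrite mulf_neq0 | rewrite scalerA].
  - by exists (b / a); [rewrite mulf_neq0 ?invr_eq0 | rewrite scalerA divfK].
have rE a x : a != 0 -> r (a *: x) = r x by move=> a0; rewrite /r ClE.
have lam_ex x : exists t : Rr, x = t *: r x.
  have [b b0 E] := rC x; exists b^-1; by rewrite E scalerA mulVf // scale1r.
have [lam Hlam] := choice lam_ex.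
have P0 : P 0 0 by have := sc 0 _ _ (Hpsi 0); rewrite !scale0r.
pose phi x := if x == 0 then 0 else lam x *: psi (r x).
exists phi; split.
- move=> x; rewrite /phi; case: eqP => [->|_]; first exact: P0.
  by have := sc (lam x) _ _ (Hpsi (r x)); rewrite -Hlam.
- move=> a x; rewrite /phi.
  have [->|a0] := eqVneq a 0; first by rewrite !scale0r eqxx.
  have [->|x0] := eqVneq x 0; first by rewrite scaler0 eqxx scaler0.
  have ax0 : a *: x != 0 by rewrite scaler_eq0 negb_or a0 x0.
  rewrite (negbTE ax0) ?(negbTE x0) rE // scalerA.
  congr (_ *: _).
  have rx0 : r x != 0.
    have [b b0 ->] := rC x; by rewrite scaler_eq0 negb_or b0 x0.
  have E1 := Hlam (a *: x); rewrite rE // in E1.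
  have E2 : a *: x = (a * lam x) *: r x by rewrite -scalerA -Hlam.
  apply/eqP; rewrite -subr_eq0; apply/eqP.
  have : (lam (a *: x) - a * lam x) *: r x = 0 by rewrite scalerBl -E1 -E2 subrr.
  by move/eqP; rewrite scaler_eq0 (negbTE rx0) orbF => /eqP.
Qed.

Section Basics.
Variable Y : normedModType Rr.

Definition linR (g : Y -> Rr) := forall (a : Rr) x y, g (a *: x + y) = a * g x + g y.

Lemma linR0 g : linR g -> g 0 = 0.
Proof.
move=> gl; have := gl 1 0 0; rewrite !scale1r mul1r !addr0 => /eqP.
by rewrite -subr_eq0 opprD addrA subrr add0r oppr_eq0 => /eqP.
Qed.

Lemma linRD g : linR g -> forall x y, g (x + y) = g x + g y.
Proof. by move=> gl x y; have := gl 1 x y; rewrite scale1r mul1r. Qed.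

Lemma linRZ g : linR g -> forall (a : Rr) x, g (a *: x) = a * g x.
Proof. by move=> gl a x; have := gl a x 0; rewrite !addr0 linR0 // addr0. Qed.

Lemma linRB g : linR g -> forall x y, g (x - y) = g x - g y.
Proof. by move=> gl x y; rewrite -scaleN1r linRD // linRZ // mulN1r. Qed.

Lemma hom0 f : homogeneous f -> f (0 : Y) = 0.
Proof. by move=> hf; have := hf 0 0; rewrite scale0r mul0r. Qed.

Lemma hom_bound f M : homogeneous f -> (forall x : Y, `|x| <= 1 -> `|f x| <= M) ->
  forall x, `|f x| <= M * `|x|.
Proof.
move=> hf hb x; have [->|x0] := eqVneq x 0.
  by rewrite hom0 // normr0 normr0 mulr0.
have n0 : 0 < `|x| by rewrite normr_gt0.
have Ex : x = `|x| *: (`|x|^-1 *: x) by rewrite scalerA divff ?scale1r // gt_eqF.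
have nu : `| (`|x|^-1 *: x) | <= 1.
  by rewrite normrZ normfV normr_id mulVf // gt_eqF.
rewrite {1}Ex hf normrM normr_id mulrC; apply: ler_wpM2r; first exact: ltW.
exact: hb.
Qed.
End Basics.

Lemma linbound_cont (Y : normedModType Rr) (g : Y -> Rr) C :
  linR g -> (forall y, `|g y| <= C * `|y|) -> continuous g.
Proof.
move=> gl gb x; rewrite /continuous_at; apply/(@cvgrPdist_lt _ Rr^o) => eps eps0.
have C1 : 0 < `|C| + 1 by rewrite ltr_wpDl.
have d0 : 0 < eps / (`|C| + 1) by rewrite divr_gt0.
near=> t.
rewrite -linRB //; apply: (le_lt_trans (gb _)).
apply: (le_lt_trans (ler_wpM2r (normr_ge0 _) (ler_norm C))).
apply: (le_lt_trans (ler_wpM2r (normr_ge0 _) (ler_wpDr ler01 (lexx `|C|)))).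
rewrite mulrC -ltr_pdivlMr; last exact: C1.
near: t.
exact: (@cvgr_dist_lt _ _ _ (nbhs x) _ id x (@cvg_id _ (nbhs x)) _ d0).
Unshelve. all: by end_near.
Qed.


Lemma zid (G : zmodType) (a b c p q : G) :
  a - (b + c) = a - (p + q) + (p - b) + (q - c).
Proof.
rewrite !opprD !addrA (addrAC a (-p) (-q)) subrK (addrAC a (-q) (-b)) subrK //.
Qed.

Lemma zid2 (G : zmodType) (a b c : G) : a - b = (c - b) - (c - a).
Proof. by rewrite opprB [RHS]addrC [RHS]addrA subrK. Qed.

Section Improve.
Variables (X Y Z : normedModType Rr) (U : X -> Z) (V : Y -> Z) (e k : Rr).
Hypotheses (iU : lin_isometry U) (iV : lin_isometry V).
Hypotheses (e0 : 0 <= e) (e1 : e <= 1) (ek : e * (3 + 4 * k) <= 1 / 2).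
Hypothesis kX : kappa0_admissible X k.
Hypothesis HYX : forall x : X, exists y : Y, `|y| <= `|x| /\ `|U x - V y| <= e * `|x|.
Hypothesis HXY : forall y : Y, `|y| <= 1 -> exists x : X, `|x| <= 1 /\ `|U x - V y| <= e.

Let UD x y : U (x + y) = U x + U y.
Proof. by have := iU.1 1 x y; rewrite !scale1r. Qed.
Let U0 : U 0 = 0.
Proof.
have := UD 0 0; rewrite addr0 => /eqP.
by rewrite -subr_eq0 opprD addrA subrr add0r oppr_eq0 => /eqP.
Qed.
Let UZ a x : U (a *: x) = a *: U x.
Proof. by have := iU.1 a x 0; rewrite !addr0 U0 addr0. Qed.
Let UB x y : U (x - y) = U x - U y.
Proof. by rewrite -scaleN1r UD UZ scaleN1r. Qed.
Let VD x y : V (x + y) = V x + V y.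
Proof. by have := iV.1 1 x y; rewrite !scale1r. Qed.
Let V0 : V 0 = 0.
Proof.
have := VD 0 0; rewrite addr0 => /eqP.
by rewrite -subr_eq0 opprD addrA subrr add0r oppr_eq0 => /eqP.
Qed.
Let VZ a x : V (a *: x) = a *: V x.
Proof. by have := iV.1 a x 0; rewrite !addr0 V0 addr0. Qed.
Let VB x y : V (x - y) = V x - V y.
Proof. by rewrite -scaleN1r VD VZ scaleN1r. Qed.

Lemma improve (f : Y -> Rr) (M : Rr) :
  homogeneous f -> quasilinear1 f -> 0 <= M ->
  (forall y : Y, `|y| <= 1 -> `|f y| <= M) ->
  exists g : Y -> Rr, [/\ linR g, (exists Cg, forall y, `|g y| <= Cg * `|y|) &
     forall y : Y, `|y| <= 1 -> `|f y - g y| <= (3 + 8 * k) + M / 2].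
Proof.
move=> hf qf M0 fb1.
have fb := hom_bound hf fb1.
have k0 : 0 <= k by case: kX.
pose P (x : X) (y : Y) := `|y| <= `|x| /\ `|U x - V y| <= e * `|x|.
have [phi [Hphi phiZ]] : exists phi : X -> Y,
    (forall x, P x (phi x)) /\ forall (a : Rr) x, phi (a *: x) = a *: phi x.
  apply: hom_choice; first exact: HYX.
  move=> c x y [h1 h2]; split.
    by rewrite !normrZ; apply: ler_wpM2l.
  rewrite UZ VZ -scalerBr !normrZ mulrCA; apply: ler_wpM2l => //.
pose L := 4 + 2 * e * M.
have L0 : 0 < L by rewrite /L; have := mulr_ge0 e0 M0; lra.
pose F x := f (phi x) / L.
have hF : homogeneous F.
  by move=> a x; rewrite /F phiZ hf mulrA.
have bF : bounded_on_ball F.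
  exists (M / L) => x x1; rewrite /F normrM normfV (gtr0_norm L0).
  apply: ler_wpM2r; first by rewrite invr_ge0 ltW.
  apply: (le_trans (fb _)); rewrite -[X in _ <= X]mulr1; apply: ler_wpM2l => //.
  exact: le_trans (Hphi x).1 x1.
have qF : quasilinear1 F.
  move=> x1 x2; rewrite /F -!mulrBl normrM normfV (gtr0_norm L0).
  rewrite ler_pdivrMr //.
  set y1 := phi x1; set y2 := phi x2; set y3 := phi (x1 + x2).
  set s := `|x1| + `|x2|.
  pose d := y3 - (y1 + y2).
  have Ey3 : y3 = (y1 + y2) + d by rewrite /d addrC subrK.
  have nd : `|d| <= 2 * e * s.
    have Ed : V d = (V y3 - U (x1 + x2)) + (U x1 - V y1) + (U x2 - V y2).
      by rewrite /d VB VD UD (zid _ _ _ (U x1) (U x2)).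
    have -> : `|d| = `|V d| by rewrite iV.2.
    rewrite Ed; apply: (le_trans (ler_normD _ _)).
    apply: (le_trans (lerD (ler_normD _ _) (lexx _))).
    have h3 : `|V y3 - U (x1 + x2)| <= e * (`|x1| + `|x2|).
      rewrite distrC; apply: (le_trans (Hphi _).2); apply: ler_wpM2l => //.
      exact: ler_normD.
    have h1 := (Hphi x1).2; have h2 := (Hphi x2).2.
    rewrite /s; lra.
  have ny1 := (Hphi x1).1; have ny2 := (Hphi x2).1.
  have q1 := qf (y1 + y2) d.
  have q2 := qf y1 y2.
  have fd : `|f d| <= M * (2 * e * s).
    apply: (le_trans (fb _)); exact: ler_wpM2l.
  have ny12 : `|y1 + y2| <= s.
    apply: (le_trans (ler_normD _ _)); rewrite /s; lra.
  rewrite Ey3.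
  have es : e * s <= s.
    rewrite -[X in _ <= X]mul1r; apply: ler_wpM2r => //.
    by rewrite /s addr_ge0.
  have Ms : M * (2 * e * s) = 2 * e * M * s by ring.
  have tri : `|f (y1 + y2 + d) - f y1 - f y2| <=
    `|f (y1 + y2 + d) - f (y1 + y2) - f d| + `|f d| + `|f (y1 + y2) - f y1 - f y2|.
    rewrite (_ : f (y1 + y2 + d) - f y1 - f y2 =
       (f (y1 + y2 + d) - f (y1 + y2) - f d) + f d + (f (y1 + y2) - f y1 - f y2)); last by ring.
    apply: (le_trans (ler_normD _ _)); rewrite lerD2r; exact: ler_normD.
  rewrite mulrC /L mulrDr.
  have : `|d| <= 2 * e * s := nd.
  move: tri q1 q2 fd Ms es ny12; rewrite /s; nra.
have [_ /(_ F hF bF qF) [g0 [[g0l _] g0b]]] := kX.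
pose h0 x := L * g0 x.
have h0l : forall (a : Rr) x y, h0 (a *: x + y) = a * h0 x + h0 y.
  by move=> a x y; rewrite /h0 g0l; ring.
have Fh0 x : `|f (phi x) - h0 x| <= L * k * `|x|.
  have := g0b x; rewrite /F /h0.
  rewrite (_ : f (phi x) - L * g0 x = L * (f (phi x) / L - g0 x)); last first.
    by rewrite mulrBr mulrCA divff ?mulr1 // gt_eqF.
  rewrite normrM (gtr0_norm L0) -mulrA; apply: ler_wpM2l; exact: ltW.
pose Cst := M + L * k.
have Cst0 : 0 <= Cst by rewrite /Cst addr_ge0 // mulr_ge0 // ltW.
have h0b x : h0 x <= Cst * `|U x|.
  rewrite iU.2; apply: (le_trans (ler_norm _)).
  have := Fh0 x; have := fb (phi x); have := (Hphi x).1.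
  have := normr_ge0 (phi x).
  move=> n0 a1 a2 a3.
  have : `|f (phi x)| <= M * `|x| by apply: (le_trans a2); exact: ler_wpM2l.
  have t : `|h0 x| <= `|f (phi x)| + `|f (phi x) - h0 x|.
    rewrite {1}(_ : h0 x = f (phi x) - (f (phi x) - h0 x)); last by ring.
    exact: ler_normB.
  rewrite /Cst; nra.
have [Phi [Phil Phib PhiU]] := HahnBanach Cst0 iU.1 h0l h0b.
exists (fun y => Phi (V y)); split.
- by move=> a x y; rewrite iV.1 Phil.
- by exists Cst => y; rewrite -iV.2; exact: Phib.
move=> y y1.
have [x [x1 hx]] := HXY y1.
set y' := phi x.
have ny' : `|y'| <= 1 := le_trans (Hphi x).1 x1.
have hy' : `|U x - V y'| <= e.
  apply: (le_trans (Hphi x).2); rewrite -[X in _ <= X]mulr1; exact: ler_wpM2l.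
pose d := y - y'.
have Ey : y = y' + d by rewrite /d addrC subrK.
have nd : `|d| <= 2 * e.
  rewrite -iV.2 /d VB (zid2 (V y) (V y') (U x)).
  apply: (le_trans (ler_normB _ _)); lra.
have t1 := qf y' d.
have t2 : `|f d| <= M * (2 * e) by apply: (le_trans (fb _)); exact: ler_wpM2l.
have t3 : `|f y' - h0 x| <= L * k.
  apply: (le_trans (Fh0 x)); rewrite -[X in _ <= X]mulr1; apply: ler_wpM2l => //.
  by rewrite mulr_ge0 // ltW.
have t4 : `|h0 x - Phi (V y)| <= Cst * e.
  rewrite -PhiU -linRB; last exact: Phil.
  apply: (le_trans (Phib _)); exact: ler_wpM2l.
have tri : `|f y - Phi (V y)| <=
    `|f (y' + d) - f y' - f d| + `|f d| + `|f y' - h0 x| + `|h0 x - Phi (V y)|.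
  rewrite {1}Ey (_ : f (y' + d) - Phi (V y) = (f (y' + d) - f y' - f d) + f d
     + (f y' - h0 x) + (h0 x - Phi (V y))); last by ring.
  apply: (le_trans (ler_normD _ _)); rewrite lerD2r.
  apply: (le_trans (ler_normD _ _)); rewrite lerD2r.
  exact: ler_normD.
have nd' : `|d| <= 2 * e := nd.
have fin : 1 + 2 * e + 2 * e * M + L * k + Cst * e <= 3 + 8 * k + M / 2.
  rewrite /Cst /L.
  have a1 : e * e <= e by rewrite -[X in _ <= X]mulr1; exact: ler_wpM2l.
  have a2 : e * M * (3 + 4 * k) <= M / 2.
    rewrite mulrAC; have := ler_wpM2l M0 ek; lra.
  have a3 : e * e * M * k <= e * M * k.
    by apply: ler_wpM2r => //; apply: ler_wpM2r.
  have a4 : e * k <= k by rewrite -[X in _ <= X]mul1r; exact: ler_wpM2r.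
  nra.
move: tri t1 t2 t3 t4 ny' nd' fin; nra.
Qed.
Lemma iterate (n : nat) : forall (f : Y -> Rr) (M : Rr),
  homogeneous f -> quasilinear1 f -> 0 <= M ->
  (forall y : Y, `|y| <= 1 -> `|f y| <= M) ->
  M <= 2 * (3 + 8 * k) + 1 + n%:R ->
  exists g : Y -> Rr, [/\ linR g, (exists Cg, forall y, `|g y| <= Cg * `|y|) &
     forall y : Y, `|f y - g y| <= (2 * (3 + 8 * k) + 1) * `|y|].
Proof.
have k0 : 0 <= k by case: kX.
elim: n => [|n IH] f M hf qf M0 fb hM.
- exists (fun _ => 0); split.
  + by move=> a x y; rewrite mulr0 addr0.
  + by exists 0 => y; rewrite normr0 mul0r.
  + move=> y; rewrite subr0; apply: (le_trans (hom_bound hf fb y)).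
    by apply: ler_wpM2r => //; move: hM; rewrite addr0.
- have [g1 [g1l [C1 g1b] g1f]] := improve hf qf M0 fb.
  pose f1 y := f y - g1 y.
  have hf1 : homogeneous f1 by move=> a x; rewrite /f1 hf linRZ //; ring.
  have qf1 : quasilinear1 f1.
    move=> x1 x2; apply: le_trans (qf x1 x2); rewrite /f1 (linRD g1l).
    rewrite le_eqVlt; apply/orP; left; apply/eqP; congr (`|_|); ring.
  have M10 : 0 <= 3 + 8 * k + M / 2 by lra.
  have [|g2 [g2l [C2 g2b] g2f]] := IH f1 (3 + 8 * k + M / 2) hf1 qf1 M10 g1f.
    have hn : n.+1%:R = n%:R + 1 :> Rr by rewrite mulrSr.
    move: hM; rewrite hn; have := ler0n Rr n; lra.
  exists (fun y => g1 y + g2 y); split.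
  + by move=> a x y; rewrite g1l g2l; ring.
  + exists (C1 + C2) => y; rewrite mulrDl; apply: (le_trans (ler_normD _ _)).
    exact: lerD.
  + move=> y; rewrite (_ : f y - (g1 y + g2 y) = f1 y - g2 y); first exact: g2f.
    by rewrite /f1; ring.
Qed.
End Improve.

Unset Implicit Arguments.


Theorem theorem5p3 (X : completeNormedModType Rr) :
  (kappa0 X < +oo)%E ->
  exists eps : Rr, 0 < eps /\
    forall Y : completeNormedModType Rr,
      (kadets X Y < eps%:E)%E -> (kappa0 Y < +oo)%E.
Proof.
move=> hk.
have [_ [k hadm <-] _] := ereal_inf_lt hk.
have k0 : 0 <= k by case: hadm.
pose eps := (2 * (3 + 4 * k))^-1.
have p0 : 0 < 2 * (3 + 4 * k) by lra.
have eps0 : 0 < eps by rewrite invr_gt0.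
have epsE : eps * (3 + 4 * k) = 1 / 2 :> Rr.
  rewrite /eps; clear eps0; move: p0; clear; move=> p0. field. lra.
have eps1 : eps <= 1 by nra.
have ek : eps * (3 + 4 * k) <= 1 / 2 by rewrite epsE.
exists eps; split => // Y hY.
have [_ [Z [U [V [iU iV ->]]]] hH] := ereal_inf_lt hY.
move: hH; rewrite /hausdorff gt_max => /andP [hA hB].
have U0 : U 0 = 0 by apply/normr0_eq0; rewrite iU.2 normr0.
have V0 : V 0 = 0 by apply/normr0_eq0; rewrite iV.2 normr0.
have UZ a x : U (a *: x) = a *: U x by have := iU.1 a x 0; rewrite !addr0 U0 addr0.
have VZ a x : V (a *: x) = a *: V x by have := iV.1 a x 0; rewrite !addr0 V0 addr0.
have HYX0 x : `|x| <= 1 -> exists y : Y, `|y| <= 1 /\ `|U x - V y| <= eps.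
  move=> x1.
  have : (dist_set (U x) (V @` @unit_ball Y) < eps%:E)%E.
    apply: le_lt_trans hA; apply: ereal_sup_ubound; exists (U x) => //; by exists x.
  move/ereal_inf_lt => [_ [_ [y yb <-] <-]]; rewrite lte_fin => h.
  by exists y; split => //; exact: ltW.
have HXY y : `|y| <= 1 -> exists x : X, `|x| <= 1 /\ `|U x - V y| <= eps.
  move=> y1.
  have : (dist_set (V y) (U @` @unit_ball X) < eps%:E)%E.
    apply: le_lt_trans hB; apply: ereal_sup_ubound; exists (V y) => //; by exists y.
  move/ereal_inf_lt => [_ [_ [x xb <-] <-]]; rewrite lte_fin => h.
  by exists x; split => //; rewrite distrC; exact: ltW.
have HYX x : exists y : Y, `|y| <= `|x| /\ `|U x - V y| <= eps * `|x|.
  have [->|x0] := eqVneq x 0.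
    by exists 0; rewrite U0 V0 subr0 !normr0 mulr0.
  have n0 : 0 < `|x| by rewrite normr_gt0.
  have Ex : x = `|x| *: (`|x|^-1 *: x) by rewrite scalerA divff ?scale1r // gt_eqF.
  have nu : `| (`|x|^-1 *: x) | <= 1.
    by rewrite normrZ normfV normr_id mulVf // gt_eqF.
  have [y0 [y01 hy0]] := HYX0 _ nu.
  exists (`|x| *: y0); split.
    by rewrite normrZ normr_id -[X in _ <= X]mulr1; apply: ler_wpM2l => //; exact: ltW.
  rewrite {1}Ex UZ VZ -scalerBr normrZ normr_id mulrC; apply: ler_wpM2r => //.
pose a := 2 * (3 + 8 * k) + 1.
have adm : kappa0_admissible Y a.
  split; first by rewrite /a; lra.
  move=> f hf [M fb] qf.
  have M0 : 0 <= M.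
    apply: le_trans (fb 0 _); [exact: normr_ge0 | by rewrite normr0].
  have [n hn] : exists n : nat, M < n%:R.
    by exists (Num.Def.trunc M).+1; exact: truncnS_gt.
  have hM : M <= 2 * (3 + 8 * k) + 1 + n%:R by lra.
  have [g [gl [Cg gb] gf]] :=
    iterate iU iV (ltW eps0) eps1 ek hadm HYX HXY hf qf M0 fb hM.
  exists g; split => //; split => //; exact: linbound_cont gl gb.
apply: (@le_lt_trans _ _ a%:E); last exact: ltry.
by apply: ereal_inf_lbound; exists a.
Qed.
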